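(* Let $r \in \mathbb{Z}$ and let $P_{n,k}=[x^n]\,\frac{1+rx^2}{1+x^2}\left(\frac{x}{1+x^2}\right)^k$ for $n,k\ge 0$. Then for all $n,k\ge 0$, $$P_{n,k}=\left(\binom{\frac{n+k}{2}}{k}-r \binom{\frac{n+k-2}{2}}{k}\right)(-1)^{\frac{n-k}{2}}\frac{1+(-1)^{n-k}}{2}+r\cdot 0^{n+k},$$ and $$P_{n,k}=\binom{\frac{n+k}{2}}{k}\left(1-\frac{r(n-k)}{n+k+0^{n+k}}\right)(-1)^{\frac{n-k}{2}}\frac{1+(-1)^{n-k}}{2},$$ where any expression carrying the factor $\frac{1+(-1)^{n-k}}{2}$ is interpreted as $0$ when $n-k$ is odd.
   Context: $[x^n]h(x)$ denotes the coefficient of $x^n$ in the power series $h(x)$. $0^m$ equals $1$ if $m=0$ and $0$ if $m>0$. For an integer $a$ and integer $k\ge 0$, $\binom{a}{k}=\frac{a(a-1)\cdots(a-k+1)}{k!}$ (so $\binom{-1}{0}=1$ and $\binom{a}{k}=0$ when $0\le a<k$). The numbers $P_{n,k}$ form the coefficient array (Riordan array $\left(\frac{1+rx^2}{1+x^2},\frac{x}{1+x^2}\right)$) of the restricted Chebyshev–Boubaker polynomials $P_n(x;r)=\sum_k P_{n,k}x^k$. *)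

(* Defs.v *)
From mathcomp Require Import all_boot all_order all_algebra.
Set Implicit Arguments. Unset Strict Implicit. Unset Printing Implicit Defensive.
Import Order.TTheory GRing.Theory Num.Theory.
Local Open Scope ring_scope.

(* Formal power series over rat, represented by their coefficient sequences:
   f n = [x^n] f. *)
Definition fps := nat -> rat.

Definition fps_of_poly (p : {poly rat}) : fps := fun n => p`_n.

Definition fmul (f g : fps) : fps :=
  fun n => \sum_(i < n.+1) f i * g (n - i)%N.

Fixpoint fpow (f : fps) (k : nat) : fps :=
  match k with
  | 0 => fun n => (n == 0%N)%:R
  | k'.+1 => fmul f (fpow f k')
  end.

(* Multiplicative inverse of a power series with constant term 1:
   g 0 = 1, g m = - \sum_(1 <= i <= m) f i * g (m - i).
   finv_seq f m lists g 0, ..., g m. *)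
Fixpoint finv_seq (f : fps) (m : nat) : seq rat :=
  match m with
  | 0 => [:: 1]
  | m'.+1 => let s := finv_seq f m' in
             rcons s (- \sum_(1 <= i < m.+1) f i * nth 0 s (m - i)%N)
  end.

Definition finv (f : fps) : fps := fun n => nth 0 (finv_seq f n) n.

Definition Pnk (r : int) (n k : nat) : rat :=
  fmul (fmul (fps_of_poly (1 + r%:~R *: 'X^2)) (finv (fps_of_poly (1 + 'X^2))))
       (fpow (fmul (fps_of_poly 'X) (finv (fps_of_poly (1 + 'X^2)))) k) n.

Definition binz (a : int) (k : nat) : rat :=
  (\prod_(i < k) (a%:~R - i%:R)) / (k`!)%:R.

(* Main.v *)
Require Import Defs.
From mathcomp Require Import all_boot all_order all_algebra zify ring.
From Stdlib Require Import FunctionalExtensionality.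
Import Order.TTheory GRing.Theory Num.Theory.
Local Open Scope ring_scope.

Definition delta : fps := fun n => (n == 0%N)%:R.
Definition sh1 (f : fps) : fps := fun n => if n is n'.+1 then f n' else 0.
Definition sh2 (f : fps) : fps := sh1 (sh1 f).
Definition Dop (f : fps) : fps := fun n => f n + sh2 f n.

Lemma fmul_delta g : fmul delta g = g.
Proof.
apply: functional_extensionality => n; rewrite /fmul big_ord_recl /= subn0 mul1r.
by rewrite big1 ?addr0 // => i _; rewrite /delta /= mul0r.
Qed.

Lemma fmul_sh1 f g : fmul (sh1 f) g = sh1 (fmul f g).
Proof.
apply: functional_extensionality => -[|n]; rewrite /fmul.
  by rewrite big_ord1 /= mul0r.
by rewrite big_ord_recl /= mul0r add0r; apply: eq_bigr => i _ /=; rewrite subSS.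
Qed.

Lemma fmul_add f1 f2 g : fmul (fun n => f1 n + f2 n) g = fun n => fmul f1 g n + fmul f2 g n.
Proof.
apply: functional_extensionality => n; rewrite /fmul -big_split /=.
by apply: eq_bigr => i _; rewrite mulrDl.
Qed.

Lemma fmul_scale a f g : fmul (fun n => a * f n) g = fun n => a * fmul f g n.
Proof.
apply: functional_extensionality => n; rewrite /fmul mulr_sumr.
by apply: eq_bigr => i _; rewrite mulrA.
Qed.

Lemma fmul_D f g : fmul (Dop f) g = Dop (fmul f g).
Proof. by rewrite /Dop fmul_add /sh2 !fmul_sh1. Qed.

Lemma finv_seqS f m : finv_seq f m.+1 =
  rcons (finv_seq f m) (- \sum_(1 <= i < m.+2) f i * nth 0 (finv_seq f m) (m.+1 - i)%N).
Proof. by []. Qed.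
Lemma size_finv_seq f m : size (finv_seq f m) = m.+1.
Proof. by elim: m => //= m IH; rewrite size_rcons IH. Qed.

Lemma nth_finv_seq f i m : (i <= m)%N -> nth 0 (finv_seq f m) i = Defs.finv f i.
Proof.
elim: m => [|m IH]; first by rewrite leqn0 => /eqP ->.
rewrite leq_eqVlt => /orP[/eqP -> //|him].
by rewrite finv_seqS nth_rcons size_finv_seq him IH.
Qed.

Lemma finvS f m : Defs.finv f m.+1 = - \sum_(1 <= i < m.+2) f i * Defs.finv f (m.+1 - i)%N.
Proof.
rewrite /Defs.finv finv_seqS nth_rcons size_finv_seq ltnn eqxx; congr (- _).
apply: eq_big_nat => i /andP[h1 h2]; rewrite nth_finv_seq //.
by rewrite leq_subLR -addn1 addnC leq_add2r.
Qed.

Definition cc : fps := Defs.finv (fps_of_poly (1 + 'X^2)).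

Lemma coef1X2 i : fps_of_poly (1 + 'X^2) i = (i == 0%N)%:R + (i == 2%N)%:R.
Proof. by rewrite /fps_of_poly coefD coef1 coefXn. Qed.

Lemma cc0 : cc 0 = 1.
Proof. by []. Qed.

Lemma cc1 : cc 1 = 0.
Proof. by rewrite /cc finvS big_nat1 coef1X2 /= addr0 mul0r oppr0. Qed.

Lemma ccSS m : cc m.+2 = - cc m.
Proof.
rewrite /cc finvS big_ltn // big_ltn // coef1X2 /= add0r mul0r add0r.
rewrite coef1X2 /= add0r mul1r subSS subn1 /=.
rewrite big1_seq ?addr0 // => i /andP[_]; rewrite mem_index_iota => /andP[h _].
rewrite coef1X2; case: i h => [|[|[|i]]] //= _; by rewrite add0r mul0r.
Qed.

Lemma D_cc : Dop cc = delta.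
Proof.
apply: functional_extensionality => -[|[|n]]; rewrite /Dop /sh2 /sh1 /delta /=.
- by rewrite cc0 addr0.
- by rewrite cc1 addr0.
- by rewrite ccSS addNr.
Qed.

Lemma fpsX : fps_of_poly 'X = sh1 delta.
Proof.
apply: functional_extensionality => -[|[|n]]; by rewrite /fps_of_poly coefX.
Qed.

Lemma fpsA (r : int) : fps_of_poly (1 + r%:~R *: 'X^2) =
  fun n => delta n + r%:~R * sh2 delta n.
Proof.
apply: functional_extensionality => n.
rewrite /fps_of_poly coefD coef1 coefZ coefXn /delta /sh2 /sh1.
by case: n => [|[|[|n]]].
Qed.

Definition TT k := fpow (sh1 cc) k.
Definition SS k := fmul cc (TT k).

Lemma TTS k : TT k.+1 = sh1 (SS k).
Proof. by rewrite /TT /= fmul_sh1. Qed.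

Lemma DSS k : Dop (SS k) = TT k.
Proof. by rewrite /SS -fmul_D D_cc fmul_delta. Qed.

Lemma Pnk_SS r n k : Pnk r n k = SS k n + r%:~R * sh2 (SS k) n.
Proof.
rewrite /Pnk fpsA fmul_add fmul_scale /sh2 !fmul_sh1 fmul_delta.
have -> : fmul (fps_of_poly 'X) (Defs.finv (fps_of_poly (1 + 'X^2))) = sh1 cc.
  by rewrite fpsX fmul_sh1 fmul_delta.
rewrite fmul_add fmul_scale !fmul_sh1.
by [].
Qed.

Definition sc (k n : nat) : rat :=
  if (k <= n)%N && ~~ odd (n - k) then
    (-1) ^+ (n - k)./2 * ('C((n - k)./2 + k, (n - k)./2))%:R else 0.
Definition tc (k n : nat) : rat :=
  if (k <= n)%N && ~~ odd (n - k) then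
    (-1) ^+ (n - k)./2 * ('C((n - k)./2 + k - 1, (n - k)./2))%:R else 0.

Lemma tc0 : tc 0 = delta.
Proof.
apply: functional_extensionality => n; rewrite /tc /delta subn0 /=.
case: n => [|[|n]] //=.
case: ifP => // _; rewrite addn0 bin_small ?mulr0 //.
by rewrite subn1 /= ltnSn.
Qed.

Lemma tcS k : tc k.+1 = sh1 (sc k).
Proof.
apply: functional_extensionality => -[|n] //=; rewrite /tc /sc subSS ltnS.
by case: ifP => // _; rewrite addnS subn1.
Qed.

Lemma sc_tc0 k : sc k 0 = tc k 0.
Proof. by rewrite /sc /tc; case: k. Qed.

Lemma sc_tc1 k : sc k 1 = tc k 1.
Proof. by rewrite /sc /tc; case: k => [|[|k]]. Qed.

Lemma sc_tcSS k n : sc k n.+2 + sc k n = tc k n.+2.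
Proof.
rewrite /sc /tc.
case: (leqP k n) => hkn.
  move: hkn => /subnK <-; move: (n - k)%N => m.
  rewrite -!addSn !addnK !leq_addl /=.
  case: (odd m) => //=; rewrite ?addr0 //.
  rewrite addSn subn1 /= binS natrD mulrDr exprS mulN1r.
  by rewrite !mulNr -addrA addNr addr0.
rewrite /= addr0; case: ifP => // /andP[hk hodd].
have : ((n.+2 - k)%N = 0%N \/ (n.+2 - k)%N = 1%N) by lia.
by case=> e; rewrite e in hodd *; rewrite //= !bin0.
Qed.

Lemma SS_of_TT k : TT k = tc k -> SS k = sc k.
Proof.
move=> hT.
have H n : SS k n + sh2 (SS k) n = tc k n by rewrite -hT -DSS.
apply: functional_extensionality => n.
suff : SS k n = sc k n /\ SS k n.+1 = sc k n.+1 by case.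
elim: n => [|n [IH1 IH2]].
  split; [move: (H 0%N) | move: (H 1%N)]; rewrite /sh2 /sh1 addr0 => ->.
    by rewrite sc_tc0.
  by rewrite sc_tc1.
split => //.
move: (H n.+2); rewrite /sh2 /sh1 /= IH1 => /eqP.
by rewrite -sc_tcSS (can_eq (addrK _)) => /eqP.
Qed.

Lemma TT_SS k : TT k = tc k /\ SS k = sc k.
Proof.
elim: k => [|k [IHT IHS]].
  have hT : TT 0 = tc 0 by rewrite tc0.
  by split => //; apply: SS_of_TT.
have hT : TT k.+1 = tc k.+1 by rewrite TTS IHS tcS.
by split => //; apply: SS_of_TT.
Qed.

Lemma binz_nat (a k : nat) : binz a%:Z k = ('C(a, k))%:R.
Proof.
have hp : \prod_(i < k) ((a%:Z)%:~R - i%:R) = (a ^_ k)%N%:R :> rat.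
  elim: k => [|k IH]; first by rewrite big_ord0 ffactn0.
  rewrite big_ord_recr /= IH ffactnSr natrM.
  case: (leqP k a) => hka; first by rewrite natrB.
  by rewrite ffact_small // mul0r mul0r.
rewrite /binz hp -bin_ffact natrM mulfK //.
by rewrite pnatr_eq0 -lt0n fact_gt0.
Qed.

Lemma binzN1 : binz (-1) 0 = 1.
Proof. by rewrite /binz big_ord0 divr1. Qed.

Lemma sign_int (n k : nat) : (-1) ^ (n%:Z - k%:Z) = (-1) ^+ (odd (n + k)) :> rat.
Proof.
rewrite expfzDr ?oppr_eq0 ?oner_eq0 // -invr_expz.
change ((-1) ^+ n * ((-1) ^+ k)^-1 = (-1) ^+ odd (n + k) :> rat).
rewrite -(signr_odd _ n) -(signr_odd _ k) oddD.
by case: (odd n); case: (odd k); rewrite /= ?invr1 ?invrN1 ?mulr1 ?mulrN1 ?opprK.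
Qed.

Lemma pf_eq (n k : nat) : (1 + (-1) ^ (n%:Z - k%:Z)) / 2 = (~~ odd (n + k))%:R :> rat.
Proof.
rewrite sign_int; case: (odd (n + k)) => /=.
  by rewrite expr1 subrr mul0r.
by rewrite expr0 divff.
Qed.

Lemma binC' j k : 'C(j + k, j) = 'C(j + k, k).
Proof. by rewrite -(bin_sub (leq_addl j k)) addnK. Qed.

Lemma sc_lt k n : (n < k)%N -> sc k n = 0.
Proof. by rewrite /sc ltnNge => /negbTE ->. Qed.

Lemma sc_odd k n : odd (n + k) -> sc k n = 0.
Proof.
rewrite /sc; case: leqP => //= hkn.
by rewrite oddB // -oddD => ->.
Qed.

Lemma sc_even k j : sc k (k + j.*2) = (-1) ^+ j * ('C(j + k, j))%:R.
Proof. by rewrite /sc leq_addr addKn odd_double doubleK. Qed.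

Lemma binC2 a b : 'C(a + b, b) = 'C(a + b, a).
Proof. by rewrite addnC binC' addnC. Qed.

Theorem mainTheorem2 (r : int) (n k : nat) :
  Pnk r n k =
    (binz ((n + k)./2)%N%:Z k - r%:~R * binz (((n + k)./2)%N%:Z - 1) k)
      * (-1) ^ ((n%:Z - k%:Z) %/ 2)%Z
      * ((1 + (-1) ^ (n%:Z - k%:Z)) / 2)
    + r%:~R * 0 ^+ (n + k)
  /\
  Pnk r n k =
    binz ((n + k)./2)%N%:Z k
      * (1 - r%:~R * (n%:R - k%:R) / ((n + k)%:R + 0 ^+ (n + k)))
      * (-1) ^ ((n%:Z - k%:Z) %/ 2)%Z
      * ((1 + (-1) ^ (n%:Z - k%:Z)) / 2).
Proof.
rewrite Pnk_SS; case: (TT_SS k) => _ ->; rewrite pf_eq.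
case: (boolP (odd (n + k))) => hodd.
  have hnk : (n + k != 0)%N by apply: contraTneq hodd => ->.
  have hsh : sh2 (sc k) n = 0.
    rewrite /sh2 /sh1; case: n hodd hnk => [|[|n']] //= h _.
    by apply: sc_odd; move: h; rewrite negbK.
  by rewrite sc_odd // hsh expr0n (negbTE hnk) /= !mulr0 !addr0.
have ha : (n + k = ((n + k)./2).*2)%N.
  by rewrite -[LHS]odd_double_half (negbTE hodd).
move: ha; set a := ((n + k)./2)%N => ha.
case: (ltnP n k) => hnk.
  have hsh : sh2 (sc k) n = 0.
    rewrite /sh2 /sh1; case: n hnk {hodd ha a} => [|[|n']] //= h.
    by rewrite sc_lt // (ltn_trans _ h).
  have hak : (a < k)%N by rewrite -!muln2 in ha; lia.
  have ha0 : (0 < a)%N by rewrite -!muln2 in ha; lia.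
  have hnk0 : (n + k != 0)%N by lia.
  rewrite sc_lt // hsh binz_nat bin_small // -predn_int // binz_nat bin_small; last by lia.
  by rewrite expr0n (negbTE hnk0) /= !mulr0 !mul0r !addr0.
rewrite /a; clear ha a.
have [j ->] : exists j, n = (k + j.*2)%N.
  exists ((n - k)./2)%N.
  have := odd_double_half (n - k); rewrite oddB // -oddD (negbTE hodd) /= add0n.
  rewrite -!muln2; lia.
clear hnk hodd.
have e : (k + j.*2 + k = (k + j).*2)%N by rewrite -!muln2; lia.
rewrite e doubleK /=; clear e.
have -> : ((k + j.*2)%:Z - k%:Z) = (j.*2)%:Z by rewrite PoszD addrAC subrr add0r.
rewrite divz_nat -muln2 mulnK // muln2 sc_even mulr1.
have -> : ((k + j.*2)%:R - k%:R = (j.*2)%:R :> rat) by rewrite natrD addrAC subrr add0r.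
case: j => [|j].
  have hsh : sh2 (sc k) (k + 0.*2) = 0.
    by rewrite /sh2 /sh1; case: k => [|[|k']] //=; rewrite sc_lt // addn0.
  rewrite hsh -exprnP !addn0 !expr0 !mul1r bin0 mulr0 addr0 !mulr1.
  rewrite mul0r subr0 mulr1.
  case: k {hsh} => [|k].
    by rewrite binz_nat sub0r binzN1 bin0 /= expr0; split => //; ring.
  rewrite -predn_int // /= !binz_nat binn bin_small // mulr0 subr0 expr0n /=.
  by rewrite mulr0 addr0.
have hsh : sh2 (sc k) (k + j.+1.*2)%N = (-1) ^+ j * ('C(j + k, j))%:R.
  have -> : (k + j.+1.*2 = (k + j.*2).+2)%N by rewrite doubleS !addnS.
  by rewrite /sh2 /sh1 sc_even.
rewrite hsh -exprnP mulr1.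
have h0 : 0 ^+ (k + j.+1)%N.*2 = 0 :> rat.
  by rewrite expr0n double_eq0 addn_eq0 andbF.
have hb : binz ((k + j.+1)%N%:Z - 1) k = ('C(k + j, k))%:R.
  by rewrite -predn_int ?binz_nat // addnS.
rewrite h0 hb binz_nat binC' (binC' j k) [(j.+1 + k)%N]addnC [(j + k)%N]addnC.
have hn : ('C(k + j.+1, k) * j.+1 = 'C(k + j, k) * (k + j.+1))%N.
  have := mul_bin_diag (k + j.+1) j.
  rewrite -(binC2 k j.+1) -(binC2 k j) addnS /= => h.
  by rewrite mulnC -h mulnC.
move: hn; set X := 'C(k + j.+1, k); set Y := 'C(k + j, k) => hn.
have hY : (Y%:R : rat) = X%:R * j.+1%:R / (k + j.+1)%N%:R.
  by rewrite -natrM hn natrM mulfK // pnatr_eq0 addnS.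
rewrite hY addr0 mulr0 addr0 -!muln2 !natrM exprS.
have hk : ((k + j.+1)%N%:R : rat) != 0 by rewrite pnatr_eq0 addnS.
by split; field; rewrite [1 + _]addrC natr1 -natrD pnatr_eq0 addnS.
Qed.
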